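(* Let $\mathcal{K}=(\Sigma,\to,\ell)$ be a Kripke structure over a set $AP$ of atoms and let $R\in\mathrm{PreOrd}(\Sigma)$. Then $R$ is a simulation on $\mathcal{K}$ if and only if $\mathrm{add}(R)$ is forward complete for $\{\mathbf{p}\mid p\in AP\}\cup\{\widetilde{\mathrm{pre}}_\to\}$.
   Context: A Kripke structure has a total transition relation $\to\subseteq\Sigma\times\Sigma$ and labeling $\ell:\Sigma\to\wp(AP)$; $\mathbf{p}=\{s\mid p\in\ell(s)\}$. $\widetilde{\mathrm{pre}}_\to(Y)=\{a\in\Sigma\mid\forall b\in\Sigma.\,(a\to b\Rightarrow b\in Y)\}$. $\mathrm{PreOrd}(\Sigma)$ is the set of reflexive transitive relations on $\Sigma$. A relation $R\subseteq\Sigma\times\Sigma$ is a simulation if whenever $sRs'$: $\ell(s')\subseteq\ell(s)$, and for every $t$ with $s\to t$ there is $t'$ with $s'\to t'$ and $tRt'$. For $R\in\mathrm{PreOrd}(\Sigma)$, $\mathrm{add}(R)$ is the abstract domain of $\wp(\Sigma)$ whose associated upper closure operator is $\mathrm{pre}_R(S)=\{x\in\Sigma\mid\exists y\in S.\,xRy\}$. A closure $\mu$ is forward complete for a constant $k\subseteq\Sigma$ if $\mu(k)=k$, and for a unary $f$ if $f(\mu(X))=\mu(f(\mu(X)))$ for all $X\subseteq\Sigma$. *)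

(* Defs.v *)
(* Subsets of a type T are predicates T -> Prop;
   equality of subsets is Leibniz equality of predicates
   (functional/propositional extensionality are available). *)

Definition pset (T : Type) := T -> Prop.

(* Kripke structure data: states Sigma, atoms AP, transition relation [trans],
   labeling [label s p] meaning p \in l(s). Totality is a separate predicate. *)
Definition total_rel {S : Type} (trans : S -> S -> Prop) : Prop :=
  forall s, exists t, trans s t.

Definition atom_set {S AP : Type} (label : S -> AP -> Prop) (p : AP) : pset S :=
  fun s => label s p.

Definition pre_tilde {S : Type} (trans : S -> S -> Prop) (Y : pset S) : pset S :=
  fun a => forall b, trans a b -> Y b.

Definition is_preorder {S : Type} (R : S -> S -> Prop) : Prop :=
  (forall x, R x x) /\ (forall x y z, R x y -> R y z -> R x z).

Definition is_simulation {S AP : Type} (trans : S -> S -> Prop)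
  (label : S -> AP -> Prop) (R : S -> S -> Prop) : Prop :=
  forall s s', R s s' ->
    (forall p, label s' p -> label s p) /\
    (forall t, trans s t -> exists t', trans s' t' /\ R t t').

(* pre_R(S) = { x | exists y in S, x R y }: the upper closure operator of add(R) *)
Definition pre_R {S : Type} (R : S -> S -> Prop) (X : pset S) : pset S :=
  fun x => exists y, X y /\ R x y.

Definition fwd_complete_const {S : Type} (mu : pset S -> pset S) (k : pset S) : Prop :=
  mu k = k.

Definition fwd_complete_unary {S : Type} (mu : pset S -> pset S)
  (f : pset S -> pset S) : Prop :=
  forall X : pset S, f (mu X) = mu (f (mu X)).

(* Main.v *)
Require Import Defs.
From Stdlib Require Import FunctionalExtensionality PropExtensionality.

Theorem theorem7p8 (Sigma AP : Type) (trans : Sigma -> Sigma -> Prop)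
  (label : Sigma -> AP -> Prop) (R : Sigma -> Sigma -> Prop) :
  total_rel trans ->
  is_preorder R ->
  (is_simulation trans label R <->
   ((forall p : AP, fwd_complete_const (pre_R R) (atom_set label p)) /\
    fwd_complete_unary (pre_R R) (pre_tilde trans))).
Proof.
  intros _ [Hrefl Htr]. split.
  - intros Hsim. split.
    + intros p. unfold fwd_complete_const. apply functional_extensionality; intro x.
      apply propositional_extensionality. unfold pre_R, atom_set. split.
      * intros [y [Hy Hxy]]. exact (proj1 (Hsim _ _ Hxy) p Hy).
      * intros Hx. exists x. auto.
    + intros X. apply functional_extensionality; intro a.
      apply propositional_extensionality. unfold pre_R, pre_tilde. split.
      * intros Ha. exists a. auto.
      * intros [a' [Ha' Haa']] b Hab.
        destruct (proj2 (Hsim _ _ Haa') b Hab) as [b' [Hb' Hbb']].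
        destruct (Ha' b' Hb') as [y [Hy Hb'y]].
        exists y. split; [exact Hy | eapply Htr; eauto].
  - intros [Hc Hu] s s' Hss'. split.
    + intros p Hp. specialize (Hc p). unfold fwd_complete_const in Hc.
      change (atom_set label p s). rewrite <- Hc. exists s'. split; [exact Hp | exact Hss'].
    + intros t Hst.
      set (X := fun t' => trans s' t').
      assert (H1 : pre_R R (pre_tilde trans (pre_R R X)) s).
      { exists s'. split; [|exact Hss'].
        intros b Hb. exists b. split; [exact Hb | apply Hrefl]. }
      rewrite <- (Hu X) in H1.
      destruct (H1 t Hst) as [t' [Ht' Htt']]. exists t'. auto.
Qed.
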